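(* Let $T$ be an invertible operator in $\mathcal D(\mathcal P_n)$. Then $$K_h(T)=\varrho[T\phi_n]=d_h\bigl(Z(\phi_n),Z(T\phi_n)\bigr).$$
   Context: Let $n\ge 1$ be an integer and $\mathcal P_n$ the complex vector space of polynomials in one complex variable of degree at most $n$; $\phi_k(z)=z^k/k!$. $D$ is differentiation on $\mathcal P_n$, $I$ the identity, and $\mathcal D(\mathcal P_n)$ the linear span of $I,D,\dots,D^n$. For a nonzero $f$, $Z(f)$ is the multiset of roots of $f$ (with multiplicity; empty for nonzero constants); $Z(0)=\mathbb C$. For nonconstant $f$, the root radius is $\varrho[f]=\max\{|u|:u\in Z(f)\}$. For finite nonempty $A,B\subset\mathbb C$, $d_h(A,B)=\max_{y\in B}\min_{x\in A}|x-y|$, with conventions $d_h(\emptyset,\emptyset)=0$, $d_h(A,\emptyset)=d_h(\emptyset,A)=+\infty$ for $A\ne\emptyset$, and $d_h(A,B)=0$ if one of $A,B$ equals $\mathbb C$ and the other is nonempty. $K_h(T)=\sup_{f\in\mathcal P_n}d_h(Z(f),Z(Tf))$. *)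

(* Defs.v *)
From HB Require Import structures.
From mathcomp Require Import all_boot all_order all_algebra.
From mathcomp Require Import complex.
From mathcomp Require Import boolp classical_sets reals ereal.
Set Implicit Arguments. Unset Strict Implicit. Unset Printing Implicit Defensive.
Import Order.TTheory GRing.Theory Num.Theory.
Local Open Scope ring_scope.
Local Open Scope classical_set_scope.

Section Defs.
Variable R : realType.
Local Notation C := R[i].

Definition cnorm (z : C) : R := Normc.normc z.

Definition Pn (n : nat) : set {poly C} := [set f | (size f <= n.+1)%N].

Definition phi (k : nat) : {poly C} := (k`!%:R)^-1 *: 'X^k.

Definition diffop (n : nat) (a : 'I_n.+1 -> C) (f : {poly C}) : {poly C} :=
  \sum_(k < n.+1) a k *: f^`(k).

Definition invertible_on (n : nat) (T : {poly C} -> {poly C}) : Prop :=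
  (forall f, Pn n f -> Pn n (T f)) /\
  (forall f g, Pn n f -> Pn n g -> T f = T g -> f = g) /\
  (forall g, Pn n g -> exists2 f, Pn n f & T f = g).

(* Z(f): the set of roots of f (multiplicities irrelevant for d_h); Z(0) = C *)
Definition Z (f : {poly C}) : set C :=
  if f == 0 then setT else [set x | root f x].

Definition d_h (A B : set C) : \bar R :=
  if `[< A = set0 >] then (if `[< B = set0 >] then 0%E else +oo%E)
  else if `[< B = set0 >] then +oo%E
  else if `[< A = setT \/ B = setT >] then 0%E
  else ereal_sup [set ereal_inf [set (cnorm (x - y))%:E | x in A] | y in B].

Definition K_h (n : nat) (T : {poly C} -> {poly C}) : \bar R :=
  ereal_sup [set d_h (Z f) (Z (T f)) | f in Pn n].

(* root radius rho[f] = max { |u| : u in Z(f) } (used for nonconstant f) *)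
Definition rho (f : {poly C}) : R := sup [set cnorm u | u in Z f].

End Defs.

(* Main.v *)
Require Import Defs.
From HB Require Import structures.
From mathcomp Require Import all_boot all_order all_algebra.
From mathcomp Require Import complex.
From mathcomp Require Import boolp classical_sets reals ereal.
From mathcomp Require Import ring lra.
Import Order.TTheory GRing.Theory Num.Theory.
Local Open Scope ring_scope.

Set Implicit Arguments. Unset Strict Implicit.

Section CX.
Variable R : rcfType.
Local Notation C := R[i].

Definition n2 (z : C) : R := complex.Re z ^+ 2 + complex.Im z ^+ 2.

Lemma n2_ge0 z : 0 <= n2 z.
Proof. rewrite /n2; nra. Qed.

Lemma normc_n2 z : Normc.normc z = Num.sqrt (n2 z).
Proof. by case: z. Qed.

Lemma n2M z w : n2 (z * w) = n2 z * n2 w.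
Proof. case: z => a b; case: w => c d; rewrite /n2 /=. ring. Qed.

Lemma n2_eq0 z : (n2 z == 0) = (z == 0).
Proof.
case: z => a b; rewrite /n2 /= eq_complex /=.
apply/eqP/andP => [h|[/eqP-> /eqP->]]; last by rewrite expr0n /= addr0.
split; apply/eqP; nra.
Qed.

Lemma le_normc z r : 0 <= r -> (Normc.normc z <= r) = (n2 z <= r ^+ 2).
Proof.
move=> r0; rewrite normc_n2.
have h := sqr_sqrtr (n2_ge0 z); have h0 := sqrtr_ge0 (n2 z).
apply/idP/idP => H.
  by rewrite -h; apply: ler_pM => //.
rewrite leNgt; apply/negP => H2.
have : r ^+ 2 < Num.sqrt (n2 z) ^+ 2 by rewrite ltr_pM.
by rewrite h ltNge H.
Qed.

Lemma lt_normc z r : 0 <= r -> (r < Normc.normc z) = (r ^+ 2 < n2 z).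
Proof. by move=> r0; rewrite !ltNge le_normc. Qed.

End CX.

Section CX2.
Variable R : rcfType.
Local Notation C := R[i].
Local Notation Re := (@complex.Re R).
Local Notation Im := (@complex.Im R).

Lemma ReD (z w : C) : Re (z + w) = Re z + Re w.
Proof. by case: z; case: w. Qed.
Lemma ImD (z w : C) : Im (z + w) = Im z + Im w.
Proof. by case: z; case: w. Qed.
Lemma Re0 : Re 0 = 0. Proof. by []. Qed.
Lemma Im0 : Im 0 = 0. Proof. by []. Qed.

Lemma Re_sum (ws : seq C) : Re (\sum_(w <- ws) w) = \sum_(w <- ws) Re w.
Proof. elim: ws => [|w ws IH]; first by rewrite !big_nil. by rewrite !big_cons ReD IH. Qed.
Lemma Im_sum (ws : seq C) : Im (\sum_(w <- ws) w) = \sum_(w <- ws) Im w.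
Proof. elim: ws => [|w ws IH]; first by rewrite !big_nil. by rewrite !big_cons ImD IH. Qed.

Lemma ReMs (s : C) (ws : seq C) : Re (s * \sum_(w <- ws) w) = \sum_(w <- ws) Re (s * w).
Proof.
rewrite mulr_sumr; elim: ws => [|w ws IH]; first by rewrite !big_nil.
by rewrite !big_cons ReD IH.
Qed.

Lemma n2_subR (z : C) (t : R) : n2 (z - t%:C)%C = n2 z - 2 * t * Re z + t ^+ 2.
Proof. case: z => a b; rewrite /n2 /=. ring. Qed.

Lemma CS (ws : seq C) :
  n2 (\sum_(w <- ws) w) <= (size ws)%:R * \sum_(w <- ws) n2 w.
Proof.
rewrite /n2 Re_sum Im_sum.
elim: ws => [|w ws IH]; first by rewrite !big_nil /= expr0n /= addr0 mul0r.
rewrite !big_cons /=.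
set A := \sum_(j <- ws) Re j in IH *; set B := \sum_(j <- ws) Im j in IH *.
set Q := \sum_(j <- ws) (Re j ^+ 2 + Im j ^+ 2) in IH *.
set m := (size ws)%:R in IH *.
have m0 : 0 <= m by rewrite /m ler0n.
have Q0 : 0 <= Q by rewrite /Q sumr_ge0 // => j _; nra.
rewrite -[(size ws).+1]addn1 natrD -/m.

set a := Re w; set b := Im w.
have h1 : 0 <= (A - m * a) ^+ 2 + (B - m * b) ^+ 2 by rewrite addr_ge0 ?sqr_ge0.
have [m0'|mp] := eqVneq m 0.
  have hh : A ^+ 2 + B ^+ 2 <= 0 by rewrite -(mul0r Q) -m0'.
  rewrite m0'.
  have hA : A ^+ 2 = 0 by nra. have hB : B ^+ 2 = 0 by nra.
  move/eqP: hA; rewrite sqrf_eq0 => /eqP ->; move/eqP: hB; rewrite sqrf_eq0 => /eqP ->.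
  nra.
have mpos : 0 < m by rewrite lt_def mp m0.
have : 2 * m * (A * a + B * b) <= m * (Q + m * (a ^+ 2 + b ^+ 2)) by nra.
move=> h2.
have h3 : 2 * (A * a + B * b) <= Q + m * (a ^+ 2 + b ^+ 2).
  rewrite -(ler_pM2l mpos); nra.
nra.
Qed.

Lemma term_ineq (s w u : C) (rho : R) :
  w * (s - u) = 1 -> rho ^+ 2 < n2 u ->
  (rho ^+ 2 - n2 s) * n2 w + 2 * Re (s * w) < 1.
Proof.
move=> hw hu.
have w0 : w != 0 by apply: contra_eqN hw => /eqP->; rewrite mul0r eq_sym oner_eq0.
have nw : 0 < n2 w by rewrite lt_def n2_eq0 w0 n2_ge0.
have e : u * w = s * w - (1%:C)%C.
  by rewrite (_ : (1%:C)%C = 1) // -hw; ring.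
have e2 : n2 u * n2 w = n2 s * n2 w - 2 * Re (s * w) + 1.
  by rewrite -n2M e n2_subR n2M expr1n mulr1.
have : rho ^+ 2 * n2 w < n2 u * n2 w by rewrite ltr_pM2r.
nra.
Qed.


Lemma sum_lt_size (f : C -> R) (ws : seq C) : ws != [::] ->
  (forall w, w \in ws -> f w < 1) -> \sum_(w <- ws) f w < (size ws)%:R.
Proof.
elim: ws => [//|w ws IH] _ H; rewrite big_cons /= -addn1 natrD addrC.
have hw : f w < 1 by apply: H; rewrite mem_head.
case: ws IH H => [|w' ws'] IH H; first by rewrite big_nil /= ?addr0 ?add0r.
apply: ltrD => //. apply: IH => // x hx; apply: H; by rewrite in_cons hx orbT.
Qed.

Lemma key_ineq (ws : seq C) (N : nat) (s p : C) (rho : R) :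
 (0 < N)%N -> (size ws <= N)%N ->
 (forall w, w \in ws -> exists u, w * (s - u) = 1 /\ rho ^+ 2 < n2 u) ->
 n2 p <= rho ^+ 2 -> n2 s <= rho ^+ 2 ->
 (s - p) * \sum_(w <- ws) w != N%:R.
Proof.
move=> N0 sz H hp hs; apply/eqP => e.
have [ws0|wsn] := eqVneq ws [::].
  by move: e; rewrite ws0 big_nil mulr0 => /eqP; rewrite eq_sym pnatr_eq0; case: (N) N0.
set S := \sum_(w <- ws) w in e.
set al := rho ^+ 2 - n2 s.
have al0 : 0 <= al by rewrite subr_ge0.
have hF : \sum_(w <- ws) (al * n2 w + 2 * Re (s * w)) < (size ws)%:R.
  apply: sum_lt_size => // w hw; have [u [h1 h2]] := H w hw; exact: term_ineq h1 h2.
have eF : \sum_(w <- ws) (al * n2 w + 2 * Re (s * w)) =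
   al * \sum_(w <- ws) n2 w + 2 * Re (s * S).
  by rewrite big_split /= -!mulr_sumr ReMs.
have ep : p * S = s * S - ((N%:R : R)%:C)%C.
  by rewrite rmorph_nat -e; ring.
have e1 : n2 (p * S) <= rho ^+ 2 * n2 S by rewrite n2M ler_wpM2r ?n2_ge0.
rewrite ep n2_subR n2M in e1.
have cs := CS ws.
have hS0 : 0 <= \sum_(w <- ws) n2 w by rewrite sumr_ge0 // => w _; exact: n2_ge0.
have hm : (size ws)%:R <= N%:R :> R by rewrite ler_nat.
have hN : 0 < N%:R :> R by rewrite ltr0n.
set Q := \sum_(w <- ws) n2 w in hS0 eF cs.
set m := (size ws)%:R in hF cs hm.
set M := N%:R in hm hN e1 *.
have h2 : al * n2 S <= al * (m * Q) by rewrite ler_wpM2l.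
have h3 : al * (m * Q) <= al * (M * Q) by rewrite ler_wpM2l // ler_wpM2r.
rewrite eF in hF.
have h4 : M * (al * Q + 2 * Re (s * S)) < M * m by rewrite ltr_pM2l.
have h5 : M * m <= M * M by rewrite ler_wpM2l // ltW.
rewrite /al in h2 h3 h4; nra.
Qed.

End CX2.

Section Lag.
Variable R : rcfType.
Local Notation C := R[i].

Lemma deriv_prod_XsubC (rs : seq C) (s : C) : s \notin rs ->
  (\prod_(z <- rs) ('X - z%:P))^`().[s] =
  (\prod_(z <- rs) ('X - z%:P)).[s] * \sum_(z <- rs) (s - z)^-1.
Proof.
elim: rs => [|z rs IH]; first by rewrite !big_nil derivC !hornerC mulr0.
rewrite in_cons negb_or => /andP[sz srs].
rewrite !big_cons derivM derivXsubC mul1r !hornerE IH //.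
have : s - z != 0 by rewrite subr_eq0.
move=> h; field => //.
Qed.

Lemma laguerre (N : nat) (g : {poly C}) (p s : C) (rho : R) :
  (0 < N)%N -> g != 0 -> (size g <= N.+1)%N ->
  (forall u, root g u -> rho < Normc.normc u) ->
  Normc.normc p <= rho -> Normc.normc s <= rho ->
  (N%:R *: g - ('X - p%:P) * g^`()).[s] != 0.
Proof.
move=> N0 g0 sg hr hp hs.
have rho0 : 0 <= rho by apply: le_trans hs; rewrite normc_n2 sqrtr_ge0.
rewrite le_normc // in hp; rewrite le_normc // in hs.
have [rs grs] := closed_field_poly_normal g.
set P := \prod_(z <- rs) ('X - z%:P) in grs.
set c := lead_coef g in grs.
have c0 : c != 0 by rewrite lead_coef_eq0.
have srs : s \notin rs.
  apply/negP => srs; have : root g s.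
    by rewrite grs rootZ // root_prod_XsubC.
  by move/hr; rewrite lt_normc // ltNge hs.
have Ps : P.[s] != 0.
  by rewrite horner_prod prodf_seq_neq0; apply/allP => z zr /=; rewrite hornerXsubC subr_eq0; by apply: contraNN srs => /eqP ->.
have szr : (size rs <= N)%N.
  by move: sg; rewrite grs size_scale // size_prod_XsubC.
rewrite grs derivZ -scalerAr !hornerE deriv_prod_XsubC //.
set W := \sum_(z <- rs) (s - z)^-1.
rewrite -/P.
have -> : N%:R * c * P.[s] - c * (s - p) * (P.[s] * W) =
          (c * P.[s]) * (N%:R - (s - p) * W) by ring.
rewrite mulf_neq0 ?mulf_neq0 // subr_eq0 eq_sym.
have -> : W = \sum_(w <- [seq (s - z)^-1 | z <- rs]) w by rewrite big_map.
apply: (@key_ineq _ _ _ _ _ rho) => //; first by rewrite size_map.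
move=> w /mapP [z zr ->]; exists z; split.
  rewrite mulVf // subr_eq0; apply: contraNN srs => /eqP ->; exact: zr.
by rewrite -lt_normc //; apply: hr; rewrite grs rootZ // root_prod_XsubC.
Qed.

End Lag.

Section Apolar.
Variable F : comNzRingType.

Definition Bf n (q g : {poly F}) : F :=
  \sum_(k < n.+1) ((n - k)`! * k`!)%:R * (q`_(n - k) * g`_k).

Lemma B_step n (q1 g : {poly F}) z : (size q1 <= n.+1)%N ->
  Bf n.+1 (q1 * ('X - z%:P)) g = Bf n q1 (n.+1%:R *: g - ('X + z%:P) * g^`()).
Proof.
move=> sq.
have q1n : q1`_n.+1 = 0 by apply/(leq_sizeP _ _ sq).
rewrite /Bf.
have eL : forall k : 'I_n.+2,
   ((n.+1 - k)`! * k`!)%:R * ((q1 * ('X - z%:P))`_(n.+1 - k) * g`_k) =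
   ((n.+1 - k)`! * k`!)%:R * ((if (n.+1 - k == 0)%N then 0 else q1`_(n.+1 - k).-1) * g`_k)
   - z * (((n.+1 - k)`! * k`!)%:R * (q1`_(n.+1 - k) * g`_k)).
  move=> k; rewrite mulrBr coefB coefMX coefMC.
  by move: (if _ then _ else _) (_ %:R) => a c; ring.
rewrite (eq_bigr _ (fun k _ => eL k)) sumrB -mulr_sumr.
rewrite big_ord_recr /= subnn eqxx mul0r mulr0 addr0.
rewrite [X in _ - z * X]big_ord_recl /= subn0 q1n mul0r mulr0 add0r.
have eR : forall k : 'I_n.+1,
  ((n - k)`! * k`!)%:R * (q1`_(n - k) * (n.+1%:R *: g - ('X + z%:P) * g^`())`_k) =
  ((n.+1 - k)`! * k`!)%:R * (q1`_(n - k) * g`_k)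
  - z * (((n - k)`! * (k.+1)`!)%:R * (q1`_(n - k) * g`_k.+1)).
  move=> [k hk] /=.
  have hX : ('X * g^`())`_k = g`_k *+ k.
    by rewrite coefXM; case: (k) => //= k'; rewrite coef_deriv.
  rewrite coefB coefZ mulrDl coefD hX coefCM coef_deriv.
  have -> : (n.+1 - k = (n - k).+1)%N by rewrite subSn.
  have hnk : ((n - k).+1)%:R = n.+1%:R - k%:R :> F.
    by rewrite -natrB ?subSn // ltnW.
  rewrite factS [(k.+1)`!]factS !natrM hnk -mulr_natr; ring.
rewrite (eq_bigr _ (fun k _ => eR k)) sumrB -mulr_sumr.
congr (_ - z * _).
apply: eq_bigr => -[k hk] _ /=.
by rewrite subSn.
Qed.

End Apolar.

Section BNZ.
Variable R : rcfType.
Local Notation C := R[i].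

Lemma normcN0 (z : C) : Normc.normc (- z) = Normc.normc z.
Proof. by rewrite !normc_n2; case: z => a b; rewrite /n2 /= !sqrrN. Qed.

Lemma normc0' : Normc.normc (0 : C) = 0.
Proof. by rewrite normc_n2 /n2 /= expr0n /= addr0 sqrtr0. Qed.

Lemma normc_ge0' (z : C) : 0 <= Normc.normc z.
Proof. by rewrite normc_n2 sqrtr_ge0. Qed.

Lemma B_nz n (q g : {poly C}) (rho : R) :
  size q = n.+1 -> (forall z, root q z -> Normc.normc z <= rho) ->
  g != 0 -> (size g <= n.+1)%N -> (forall u, root g u -> rho < Normc.normc u) ->
  Bf n q g != 0.
Proof.
elim: n q g => [|n IH] q g sq hq g0 sg hg.
  rewrite /Bf big_ord1 /= mul1r.
  have q0 : q`_0 != 0.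
    have e := size1_polyC (eq_leq sq); apply/eqP => h.
    by move: sq; rewrite e h size_polyC eqxx.
  have g00 : g`_0 != 0.
    have e := size1_polyC sg; apply/eqP => h.
    by move: g0; rewrite e h eqxx.
  by rewrite mulf_neq0.
have : size q != 1 by rewrite sq.
move/closed_rootP => [z rz].
have [q1 eq1] := factor_theorem _ _ rz.
have q10 : q1 != 0 by apply/eqP => h; move: sq; rewrite eq1 h mul0r size_poly0.
have sq1 : size q1 = n.+1.
  by move: sq; rewrite eq1 size_mul ?polyXsubC_eq0 // size_XsubC addn2 => -[].
have rho0 : 0 <= rho by apply: le_trans (hq z rz); exact: normc_ge0'.
have hz : Normc.normc (- z) <= rho by rewrite normcN0; exact: hq.
set h := n.+1%:R *: g - ('X + z%:P) * g^`().
have hL : forall s, Normc.normc s <= rho -> h.[s] != 0.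
  move=> s hs; rewrite /h -[z]opprK polyCN.
  apply: (@laguerre _ n.+1 g (- z) s rho) => //.
rewrite eq1 B_step -/h; last by rewrite sq1.
apply: IH => //.
- move=> u ru; apply: hq; rewrite eq1 rootM ru //.
- have h0 := hL 0; rewrite normc0' in h0; apply: contra_neq (h0 rho0) => ->; by rewrite horner0.
- apply/leq_sizeP => j hj.
  have gj := elimT (leq_sizeP g n.+2) sg.
  have hX : ('X * g^`())`_j = g`_j *+ j.
    by rewrite coefXM; case: (j) => //= k; rewrite coef_deriv.
  rewrite /h coefB coefZ mulrDl coefD hX coefCM coef_deriv (gj j.+1) //.
  rewrite mul0rn mulr0 addr0.
  have [ej|lj] := eqVneq j n.+1; first by rewrite ej mulr_natl subrr.
  rewrite gj ?mulr0 ?mul0rn ?subr0 //.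
  by rewrite ltn_neqAle eq_sym lj hj.
- move=> u ru; rewrite ltNge; apply/negP => hu.
  by move: (hL u hu); rewrite -/(root h u) ru.
Qed.

End BNZ.

Section Poly.
Variable R : realType.
Local Notation C := R[i].
Variables (n : nat) (a : 'I_n.+1 -> C).

Lemma diffop0 : diffop a 0 = 0.
Proof. by rewrite /diffop big1 // => k _; rewrite derivn_poly0 ?size_poly0 // scaler0. Qed.

Lemma diffopC c : diffop a c%:P = (a ord0 * c)%:P.
Proof.
rewrite /diffop big_ord_recl big1 => [|k _]; last by rewrite derivnC /= scaler0.
by rewrite derivnC /= addr0 -mul_polyC polyCM.
Qed.

Lemma diffop_horner f y : (diffop a f).[y] = \sum_(k < n.+1) a k * (f^`(k)).[y].
Proof. by rewrite /diffop horner_sum; apply: eq_bigr => k _; rewrite hornerZ. Qed.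

Lemma derivn_shift (f : {poly C}) y k :
  (f \Po ('X + y%:P))^`(k) = f^`(k) \Po ('X + y%:P).
Proof.
elim: k => [|k IH]; first by rewrite !derivn0.
by rewrite !derivnS IH deriv_comp derivD derivX derivC addr0 mulr1.
Qed.

Lemma coef_shift (f : {poly C}) y k :
  (f \Po ('X + y%:P))`_k * (k`!)%:R = (f^`(k)).[y].
Proof.
have := horner_coef0 ((f \Po ('X + y%:P))^`(k)).
rewrite derivn_shift horner_comp !hornerE => ->.
by rewrite -derivn_shift coef_derivn addn0 ffactnn mulr_natr.
Qed.

Lemma coef_q j : (diffop a (phi R n))`_j =
  \sum_(k < n.+1) a k * ((n`!%:R)^-1 * (n ^_ k)%:R) * (j == (n - k)%N)%:R.
Proof.
rewrite /diffop coef_sum; apply: eq_bigr => k _.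
rewrite /phi derivnZ derivnXn coefZ coefZ coefMn coefXn.
by rewrite -mulr_natr; ring.
Qed.

Lemma coef_q_at (k' : 'I_n.+1) :
  (diffop a (phi R n))`_(n - k') = a k' * ((n`!%:R)^-1 * (n ^_ k')%:R).
Proof.
rewrite coef_q (bigD1 k') //= eqxx mulr1 big1 ?addr0 // => k kk.
suff -> : (n - k' == n - k)%N = false by rewrite mulr0.
apply/negbTE; apply: contra kk => /eqP e.
have h1 := ltn_ord k; have h2 := ltn_ord k'.
apply/eqP/val_inj => /=.
by rewrite -(subKn (h1 : (k <= n)%N)) -(subKn (h2 : (k' <= n)%N)) e.
Qed.

Lemma fact_neq0 m : (m`!%:R : C) != 0.
Proof. by rewrite pnatr_eq0 -lt0n fact_gt0. Qed.

Lemma B_eq f y :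
  Bf n (diffop a (phi R n)) (f \Po ('X + y%:P)) = (diffop a f).[y].
Proof.
rewrite /Bf diffop_horner; apply: eq_bigr => k _.
rewrite coef_q_at -coef_shift.
have e : ((n ^_ k)%:R * ((n - k)`!)%:R : C) = n`!%:R.
  by rewrite -natrM ffact_fact // -ltnS ltn_ord.
have := fact_neq0 n => h.
rewrite natrM -e.
have : (n ^_ k)%:R * ((n - k)`!)%:R != 0 :> C by rewrite e.
rewrite mulf_eq0 negb_or => /andP[h1 h2].
by field; rewrite h1 h2.
Qed.

Lemma size_q : a ord0 != 0 -> size (diffop a (phi R n)) = n.+1.
Proof.
move=> a0; apply/eqP; rewrite eqn_leq; apply/andP; split.
  apply/leq_sizeP => j hj; rewrite coef_q big1 // => k _.
  suff -> : (j == (n - k)%N) = false by rewrite mulr0.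
  apply/negbTE; rewrite neq_ltn; apply/orP; right.
  by apply: leq_ltn_trans hj; rewrite leq_subr.
rewrite ltnNge; apply/negP => /leq_sizeP /(_ n (leqnn n)).
have := coef_q_at ord0; rewrite subn0 => ->.
apply/eqP; rewrite mulf_neq0 // mulf_neq0 ?invr_eq0 ?fact_neq0 //.
by rewrite ffactn0 oner_eq0.
Qed.

End Poly.

Section G.
Local Open Scope classical_set_scope.
Variable R : realType.
Local Notation C := R[i].

Lemma cnorm_ge0 (z : C) : 0 <= cnorm z.
Proof. exact: normc_ge0'. Qed.

Lemma d_h_le (A B : set C) (r : R) :
  (A = set0 <-> B = set0) ->
  (forall y, B y -> exists2 x, A x & cnorm (x - y) <= r) -> 0 <= r ->
  (d_h A B <= r%:E)%E.
Proof.
move=> eAB H r0; rewrite /d_h.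
have [A0|A0] := pselect (A = set0).
  rewrite (asboolT A0) (asboolT (proj1 eAB A0)); by rewrite lee_fin.
have B0 : B <> set0 by move=> /(proj2 eAB).
rewrite (asboolF A0) (asboolF B0).
case: (pselect (A = setT \/ B = setT)) => [h|h].
  by rewrite (asboolT h) lee_fin.
rewrite (asboolF h); apply: ge_ereal_sup => e [y By <-].
have [x Ax hx] := H y By.
apply: ereal_inf_le; exists (cnorm (x - y))%:E; first by exists x.
by rewrite lee_fin.
Qed.

Lemma Z_nz (p : {poly C}) : p != 0 -> Z p = [set x | root p x].
Proof. by move=> p0; rewrite /Z (negbTE p0). Qed.

Lemma Z_eq0 (p : {poly C}) : Z p = set0 <-> size p = 1%N.
Proof.
rewrite /Z; have [->|p0] := eqVneq p 0.
  rewrite size_poly0; split => // h; have : (@setT C) 0 by [].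
  by rewrite h.
split => h.
  apply/eqP; apply: contraT => /closed_rootP [x rx].
  by have : [set x | root p x] x by []; rewrite h.
apply/seteqP; split => x //=; move=> rx.
move/eqP: h => /size_poly1P [c c0 pc].
by move: rx; rewrite pc rootC (negbTE c0).
Qed.

Lemma root_bound (p : {poly C}) : p != 0 ->
  exists M, forall u, root p u -> cnorm u <= M.
Proof.
move=> p0; have [rs prs] := closed_field_poly_normal p.
exists (\sum_(u <- rs) cnorm u) => u ru.
have urs : u \in rs.
  by move: ru; rewrite prs rootZ ?lead_coef_eq0 // root_prod_XsubC.
elim: rs urs {prs} => [//|v rs IH]; rewrite in_cons big_cons => /orP[/eqP<-|h].
  by rewrite lerDl sumr_ge0 // => w _; exact: cnorm_ge0.
by rewrite ler_wpDl ?cnorm_ge0 // IH.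
Qed.

Lemma cnorm_real (r : R) : cnorm (r%:C)%C = `|r|.
Proof. by rewrite /cnorm normc_n2 /n2 /= expr0n /= addr0 sqrtr_sqr. Qed.

Lemma not_all_roots (p : {poly C}) : p != 0 -> [set x | root p x] <> setT.
Proof.
move=> p0 h; have [M HM] := root_bound p0.
have : [set x | root p x] ((`|M| + 1)%:C)%C by rewrite h.
move=> /= /HM; rewrite cnorm_real ger0_norm ?addr_ge0 // => h2.
have : `|M| + 1 <= `|M| by apply: le_trans h2 (ler_norm M).
lra.
Qed.

End G.

Section H.
Local Open Scope classical_set_scope.
Variable R : realType.
Local Notation C := R[i].
Variables (n : nat) (a : 'I_n.+1 -> C).
Hypothesis n1 : (1 <= n)%N.
Hypothesis inv : invertible_on n (diffop a).

Let T := diffop a.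
Let q := diffop a (phi R n).

Lemma a0_neq0 : a ord0 != 0.
Proof.
apply/eqP => a0; have [_ [Hinj _]] := inv.
have : diffop a 1 = diffop a 0.
  by rewrite diffop0 -[1]/(1%:P) diffopC a0 mul0r.
move/Hinj; rewrite /Pn /= size_poly1 size_poly0 => /(_ isT isT) /eqP.
by rewrite oner_eq0.
Qed.

Lemma sq : size q = n.+1.
Proof. exact: size_q a0_neq0. Qed.

Lemma q_neq0 : q != 0.
Proof. by rewrite -size_poly_eq0 sq. Qed.

Definition Sq := [set cnorm u | u in [set x | root q x]].

Lemma q_root_ex : exists z, root q z.
Proof. by apply/closed_rootP; rewrite sq eqSS -lt0n. Qed.

Lemma Sq_sup : has_sup Sq.
Proof.
split; first by have [z rz] := q_root_ex; exists (cnorm z); exists z.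
have [M HM] := root_bound q_neq0; exists M => _ [u ru <-]; exact: HM.
Qed.

Lemma rho_eq : rho q = sup Sq.
Proof. by rewrite /rho (Z_nz q_neq0). Qed.

Lemma rq_bound z : root q z -> cnorm z <= rho q.
Proof. by move=> rz; rewrite rho_eq; apply: sup_upper_bound Sq_sup _ _; exists z. Qed.

Lemma rho_ge0 : 0 <= rho q.
Proof. have [z rz] := q_root_ex; apply: le_trans (rq_bound rz); exact: cnorm_ge0. Qed.

Lemma core f y : f != 0 -> Pn n f -> root (diffop a f) y ->
  exists2 x, root f x & cnorm (x - y) <= rho q.
Proof.
move=> f0 Pf ry.
case: (pselect (exists2 x, root f x & cnorm (x - y) <= rho q)) => // H.
exfalso.
set g := f \Po ('X + y%:P).
have sg : size g = size f by rewrite size_comp_poly2 // size_XaddC.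
have g0 : g != 0 by rewrite -size_poly_eq0 sg size_poly_eq0.
have hg : forall u, root g u -> rho q < Normc.normc u.
  move=> u ru; rewrite ltNge; apply/negP => hu; apply: H; exists (u + y).
    by move: ru; rewrite /g root_comp !hornerE.
  by rewrite /cnorm addrK.
have sg' : (size g <= n.+1)%N by rewrite sg.
have := @B_nz R n q g (rho q) sq rq_bound g0 sg' hg.
by rewrite B_eq; move: ry; rewrite /root => /eqP ->; rewrite eqxx.
Qed.

Lemma T0 : T 0 = 0. Proof. exact: diffop0. Qed.

Lemma Pn0 : Pn n (0 : {poly C}). Proof. by rewrite /Pn /= size_poly0. Qed.

Lemma PnC (c : C) : Pn n c%:P.
Proof. by rewrite /Pn /=; apply: leq_trans (size_polyC_leq1 c) _. Qed.

Lemma T_neq0 f : Pn n f -> f != 0 -> T f != 0.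
Proof.
move=> Pf f0; apply/eqP => Tf; have [_ [Hinj _]] := inv.
have e : diffop a f = diffop a 0 by rewrite diffop0 -Tf.
by move: f0; rewrite (Hinj f 0 Pf Pn0 e) eqxx.
Qed.

Lemma size1_T f : Pn n f -> (size f = 1%N <-> size (T f) = 1%N).
Proof.
move=> Pf; have a0 := a0_neq0; split.
  move/eqP/size_poly1P => [c c0 ->].
  by rewrite /T diffopC size_polyC mulf_neq0.
move/eqP/size_poly1P => [c c0 Tc].
have [_ [Hinj _]] := inv.
have e : T (c / a ord0)%:P = T f.
  by rewrite Tc /T diffopC mulrC divfK.
by rewrite -(Hinj _ _ (PnC _) Pf e) size_polyC mulf_neq0 ?invr_eq0.
Qed.

Lemma bound f : Pn n f -> (d_h (Z f) (Z (T f)) <= (rho q)%:E)%E.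
Proof.
move=> Pf; apply: d_h_le; last exact: rho_ge0.
  by rewrite !Z_eq0; exact: size1_T.
have [->|f0] := eqVneq f 0.
  move=> y _; exists y; first by rewrite /Z eqxx.
  by rewrite subrr /cnorm normc0'; exact: rho_ge0.
move=> y; rewrite (Z_nz (T_neq0 Pf f0)) /= => ry.
have [x rx hx] := core f0 Pf ry; exists x => //.
by rewrite (Z_nz f0).
Qed.

Lemma fact_inv_neq0 : ((n`!)%:R : C)^-1 != 0.
Proof. by rewrite invr_eq0 fact_neq0. Qed.

Lemma phi_neq0 : phi R n != 0.
Proof. by rewrite /phi scaler_eq0 negb_or fact_inv_neq0 /= monic_neq0 ?monicXn. Qed.

Lemma Z_phi : Z (phi R n) = [set 0].
Proof.
rewrite (Z_nz phi_neq0); apply/seteqP; split => x /=.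
  by rewrite /phi rootZ ?fact_inv_neq0 // /root hornerXn expf_eq0 n1 /= => /eqP.
by move=> ->; rewrite /phi rootZ ?fact_inv_neq0 // /root hornerXn expf_eq0 n1 /=.
Qed.

Lemma Pn_phi : Pn n (phi R n).
Proof. by rewrite /Pn /= /phi; apply: leq_trans (size_scale_leq _ _) _; rewrite size_polyXn. Qed.

Lemma d_h_phi : d_h (Z (phi R n)) (Z q) = (rho q)%:E.
Proof.
rewrite Z_phi (Z_nz q_neq0) /d_h.
have h1 : [set (0 : C)] <> set0 by move=> h; have : [set (0:C)] 0 by []; rewrite h.
have h2 : [set x | root q x] <> set0.
  by move=> h; have [z rz] := q_root_ex; have : [set x | root q x] z by []; rewrite h.
have h3 : ~ ([set (0 : C)] = setT \/ [set x | root q x] = setT).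
  case=> h; last exact: (not_all_roots q_neq0).
  have : [set (0:C)] 1 by rewrite h.
  by move=> /= /eqP; rewrite oner_eq0.
rewrite (asboolF h1) (asboolF h2) (asboolF h3) rho_eq.
rewrite -(ereal_sup_EFin (proj2 Sq_sup) (proj1 Sq_sup)).
congr ereal_sup; apply/seteqP; split => e.
  move=> [y ry <-]; rewrite image_set1 ereal_inf1; exists (cnorm y).
    by exists y.
  by rewrite sub0r /cnorm normcN0.
move=> [r [y ry <-] <-]; exists y => //.
by rewrite image_set1 ereal_inf1 sub0r /cnorm normcN0.
Qed.

End H.

Unset Implicit Arguments.

Theorem mainTheorem4 (R : realType) (n : nat) (a : 'I_n.+1 -> R[i]) :
  (1 <= n)%N ->
  invertible_on n (diffop a) ->
  K_h n (diffop a) = (rho (diffop a (phi R n)))%:E /\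
  (rho (diffop a (phi R n)))%:E = d_h (Z (phi R n)) (Z (diffop a (phi R n))).
Proof.
move=> n1 inv.
split; last by rewrite d_h_phi.
apply/eqP; rewrite eq_le; apply/andP; split.
  by apply: ge_ereal_sup => e [f Pf <-]; exact: bound.
rewrite -(d_h_phi n1 inv); apply: ereal_sup_ubound; exists (phi R n) => //; exact: Pn_phi.
Qed.
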